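(* Let $\Gamma=\mathsf{PSL}_2(\mathbb{Z})=\langle U,S\mid U^3,S^2\rangle$, where $U$ has order $3$ and $S$ has order $2$. For integers $n,m\ge 0$ let $q(n,m)$ be the number of words in the alphabet $\{U,S\}$ containing exactly $n$ letters $U$ and $m$ letters $S$ which are equal to the identity in $\Gamma$ (the empty word counts, so $q(0,0)=1$). Let $$Q(x,y)=\sum_{n,m\ge 0}q(n,m)x^ny^m,\qquad T(x)=Q(x,x)=\sum_{n\ge0}t(n)x^n,$$ where $t(n)$ is the number of words of length $n$ in $\{U,S\}$ equal to the identity in $\Gamma$. Then $Q(x,y)$ is an algebraic function of degree $3$ over $\mathbb{Q}(x,y)$ satisfying $$(y^6-x^6+6y^2x^3-3y^4+2x^3+3y^2-1)Q^3+(x^3y^2-y^4+x^3+2y^2-1)Q^2+(x^3-y^2+1)Q+1=0.$$ In particular, $T(x)$ is an algebraic function of degree $3$ over $\mathbb{Q}(x)$ satisfying $$(6x^5-3x^4+2x^3+3x^2-1)T^3+(x^5-x^4+x^3+2x^2-1)T^2+(x^3-x^2+1)T+1=0.$$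
   Context: Words are finite sequences over the two-letter alphabet $\{U,S\}$, interpreted as products of the corresponding group elements in $\Gamma$. The generating functions are formal power series (convergent for small $|x|,|y|$). *)

(* Defs.v *)
From HB Require Import structures.
From mathcomp Require Import all_boot all_order all_algebra.
Set Implicit Arguments. Unset Strict Implicit. Unset Printing Implicit Defensive.
Import Order.TTheory GRing.Theory Num.Theory.
Local Open Scope ring_scope.

(* Words over {U,S}: a letter is a bool, [true] = U, [false] = S. *)

(* Gamma = PSL_2(Z), realised as SL_2(Z) modulo {+I,-I}.
   Standard generators: S = [[0,-1],[1,0]] (order 2 in PSL_2(Z)),
   U = S*T = [[0,-1],[1,1]] (order 3 in PSL_2(Z)). *)
Definition mx2 (a b c d : int) : 'M[int]_2 :=
  \matrix_(i < 2, j < 2)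
    (if val i == 0%N then (if val j == 0%N then a else b)
     else (if val j == 0%N then c else d)).

Definition matU : 'M[int]_2 := mx2 0 (-1) 1 1.
Definition matS : 'M[int]_2 := mx2 0 (-1) 1 0.

Definition letter_mx (b : bool) : 'M[int]_2 := if b then matU else matS.

Definition word_mx (w : seq bool) : 'M[int]_2 :=
  foldr (fun b M => letter_mx b *m M) 1%:M w.

Definition trivial_word (w : seq bool) : bool :=
  (word_mx w == 1%:M) || (word_mx w == - 1%:M).

Definition q (n m : nat) : nat :=
  #|[pred w : (n + m).-tuple bool | (count id w == n) && trivial_word w]|.

Definition t (n : nat) : nat :=
  #|[pred w : n.-tuple bool | trivial_word w]|.

(* Formal power series in two variables x,y over Q: coefficient of x^n y^m *)
Definition bser := nat -> nat -> rat.
Definition bzero : bser := fun _ _ => 0.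
Definition badd (f g : bser) : bser := fun n m => f n m + g n m.
Definition bmul (f g : bser) : bser := fun n m =>
  \sum_(i < n.+1) \sum_(j < m.+1) f i j * g (n - i)%N (m - j)%N.
(* polynomials in Q[x,y] as {poly {poly rat}}: outer variable y, inner x *)
Definition bpoly (p : {poly {poly rat}}) : bser := fun n m => (p`_m)`_n.
Definition px : {poly {poly rat}} := ('X : {poly rat})%:P.
Definition py : {poly {poly rat}} := 'X.

Definition user := nat -> rat.
Definition uzero : user := fun _ => 0.
Definition uadd (f g : user) : user := fun n => f n + g n.
Definition umul (f g : user) : user := fun n =>
  \sum_(i < n.+1) f i * g (n - i)%N.
Definition upoly (p : {poly rat}) : user := fun n => p`_n.

Definition Qser : bser := fun n m => (q n m)%:R.
Definition Tser : user := fun n => (t n)%:R.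

Definition cQ3 : {poly {poly rat}} :=
  py^+6 - px^+6 + 6%:R * py^+2 * px^+3 - 3%:R * py^+4 + 2%:R * px^+3 + 3%:R * py^+2 - 1.
Definition cQ2 : {poly {poly rat}} :=
  px^+3 * py^+2 - py^+4 + px^+3 + 2%:R * py^+2 - 1.
Definition cQ1 : {poly {poly rat}} := px^+3 - py^+2 + 1.
Definition cQ0 : {poly {poly rat}} := 1.

Definition cT3 : {poly rat} := 6%:R * 'X^5 - 3%:R * 'X^4 + 2%:R * 'X^3 + 3%:R * 'X^2 - 1.
Definition cT2 : {poly rat} := 'X^5 - 'X^4 + 'X^3 + 2%:R * 'X^2 - 1.
Definition cT1 : {poly rat} := 'X^3 - 'X^2 + 1.
Definition cT0 : {poly rat} := 1.

Definition bcubic (c3 c2 c1 c0 : {poly {poly rat}}) (F : bser) : bser :=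
  badd (bmul (bpoly c3) (bmul F (bmul F F)))
   (badd (bmul (bpoly c2) (bmul F F))
    (badd (bmul (bpoly c1) F) (bpoly c0))).
Definition ucubic (c3 c2 c1 c0 : {poly rat}) (F : user) : user :=
  uadd (umul (upoly c3) (umul F (umul F F)))
   (uadd (umul (upoly c2) (umul F F))
    (uadd (umul (upoly c1) F) (upoly c0))).

(* F is algebraic of degree 3 over Q(x,y) with the given cubic as relation:
   the (nonzero) cubic annihilates F, and no nonzero polynomial of degree <= 2
   (coefficients in Q[x,y], equivalently Q(x,y) after clearing denominators)
   annihilates F. *)
Definition balg_deg3_with (c3 c2 c1 c0 : {poly {poly rat}}) (F : bser) : Prop :=
  c3 != 0 /\ bcubic c3 c2 c1 c0 F = bzero /\
  forall a2 a1 a0 : {poly {poly rat}},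
    badd (bmul (bpoly a2) (bmul F F)) (badd (bmul (bpoly a1) F) (bpoly a0)) = bzero ->
    [/\ a2 = 0, a1 = 0 & a0 = 0].
Definition ualg_deg3_with (c3 c2 c1 c0 : {poly rat}) (F : user) : Prop :=
  c3 != 0 /\ ucubic c3 c2 c1 c0 F = uzero /\
  forall a2 a1 a0 : {poly rat},
    uadd (umul (upoly a2) (umul F F)) (uadd (umul (upoly a1) F) (upoly a0)) = uzero ->
    [/\ a2 = 0, a1 = 0 & a0 = 0].

(* Main.v *)
Require Import Defs.
From HB Require Import structures.
From mathcomp Require Import all_boot all_order all_algebra.
From mathcomp Require Import zify.
From Stdlib Require Import Ring FunctionalExtensionality.
Set Implicit Arguments. Unset Strict Implicit. Unset Printing Implicit Defensive.
Import Order.TTheory GRing.Theory Num.Theory.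
Local Open Scope ring_scope.


Definition bone : bser := bpoly 1.
Definition bopp (f : bser) : bser := fun n m => - f n m.
Definition bsub (f g : bser) : bser := badd f (bopp g).
Definition btr n m (f : bser) : {poly {poly rat}} := \poly_(j < m.+1) \poly_(i < n.+1) f i j.
Definition agree n m (A : {poly {poly rat}}) (f : bser) :=
  forall i j, (i <= n)%N -> (j <= m)%N -> (A`_j)`_i = f i j.

Lemma agree_tr n m f : agree n m (btr n m f) f.
Proof. by move=> i j hi hj; rewrite /btr coef_poly ltnS hj coef_poly ltnS hi. Qed.
Lemma agree_bpoly n m p : agree n m p (bpoly p).
Proof. by []. Qed.
Arguments agree_tr : clear implicits.
Arguments agree_bpoly : clear implicits.
Lemma agree_le n m i j A f : agree n m A f -> (i <= n)%N -> (j <= m)%N -> agree i j A f.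
Proof. move=> h hi hj a b ha hb; apply: h; [exact: leq_trans hi|exact: leq_trans hj]. Qed.

Lemma coefMM (A B : {poly {poly rat}}) n m :
  ((A * B)`_m)`_n = \sum_(j < m.+1) \sum_(i < n.+1) (A`_j)`_i * (B`_(m - j))`_(n - i).
Proof. by rewrite coefM coef_sum; apply: eq_bigr => j _; rewrite coefM. Qed.

Lemma bmul_agree n m A B f g : agree n m A f -> agree n m B g ->
  bmul f g n m = ((A * B)`_m)`_n.
Proof.
move=> hA hB; rewrite coefMM /bmul exchange_big /=.
apply: eq_bigr => j _; apply: eq_bigr => i _.
rewrite hA ?hB //; try exact: leq_subr; rewrite -ltnS; exact: ltn_ord.
Qed.

Lemma agree_mul n m A B f g : agree n m A f -> agree n m B g -> agree n m (A * B) (bmul f g).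
Proof.
move=> hA hB i j hi hj; symmetry; apply: bmul_agree.
  exact: agree_le hA hi hj.
exact: agree_le hB hi hj.
Qed.
Lemma agree_add n m A B f g : agree n m A f -> agree n m B g -> agree n m (A + B) (badd f g).
Proof. by move=> hA hB i j hi hj; rewrite !coefD hA ?hB. Qed.

Lemma bfunext (f g : bser) : (forall n m, f n m = g n m) -> f = g.
Proof. move=> h; apply: functional_extensionality => n; apply: functional_extensionality => m; exact: h. Qed.

Lemma bmulC f g : bmul f g = bmul g f.
Proof.
apply: bfunext => n m.
by rewrite (bmul_agree (agree_tr n m f) (agree_tr n m g)) (bmul_agree (agree_tr n m g) (agree_tr n m f)) mulrC.
Qed.
Lemma bmulA f g h : bmul f (bmul g h) = bmul (bmul f g) h.
Proof.
apply: bfunext => n m.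
rewrite (bmul_agree (agree_tr n m f) (agree_mul (agree_tr n m g) (agree_tr n m h))).
by rewrite (bmul_agree (agree_mul (agree_tr n m f) (agree_tr n m g)) (agree_tr n m h)) mulrA.
Qed.
Lemma bmul1 f : bmul bone f = f.
Proof.
apply: bfunext => n m.
by rewrite (bmul_agree (agree_bpoly n m 1) (agree_tr n m f)) mul1r agree_tr.
Qed.
Lemma bmulDl f g h : bmul (badd f g) h = badd (bmul f h) (bmul g h).
Proof.
apply: bfunext => n m.
rewrite (bmul_agree (agree_add (agree_tr n m f) (agree_tr n m g)) (agree_tr n m h)).
by rewrite /badd (bmul_agree (agree_tr n m f) (agree_tr n m h)) (bmul_agree (agree_tr n m g) (agree_tr n m h)) mulrDl !coefD.
Qed.

Lemma bser_rt : ring_theory bzero bone badd bmul bsub bopp (@eq bser).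
Proof.
split.
- by move=> f; apply: bfunext => n m; rewrite /badd /bzero add0r.
- by move=> f g; apply: bfunext => n m; rewrite /badd addrC.
- by move=> f g h; apply: bfunext => n m; rewrite /badd addrA.
- exact: bmul1.
- exact: bmulC.
- exact: bmulA.
- exact: bmulDl.
- by [].
- by move=> f; apply: bfunext => n m; rewrite /badd /bopp /bzero subrr.
Qed.
Add Ring bser_ring : bser_rt.

Lemma bpolyM p q : bpoly (p * q) = bmul (bpoly p) (bpoly q).
Proof. by apply: bfunext => n m; rewrite (bmul_agree (agree_bpoly n m p) (agree_bpoly n m q)). Qed.
Lemma bpolyD p q : bpoly (p + q) = badd (bpoly p) (bpoly q).
Proof. by apply: bfunext => n m; rewrite /bpoly /badd !coefD. Qed.
Lemma bpolyN p : bpoly (- p) = bopp (bpoly p).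
Proof. by apply: bfunext => n m; rewrite /bpoly /bopp !coefN. Qed.
Lemma bpolyB p q : bpoly (p - q) = bsub (bpoly p) (bpoly q).
Proof. by rewrite bpolyD bpolyN. Qed.
Lemma bpoly0 : bpoly 0 = bzero.
Proof. by apply: bfunext => n m; rewrite /bpoly !coef0. Qed.
Lemma bpoly_inj p : bpoly p = bzero -> p = 0.
Proof.
move=> h; apply/polyP => m; apply/polyP => n.
by rewrite !coef0; have := congr1 (fun F => F n m) h.
Qed.

Definition bx := bpoly px.
Definition by_ := bpoly py.
Lemma bxE f n m : bmul bx f n m = if n is n'.+1 then f n' m else 0.
Proof.
rewrite (bmul_agree (agree_bpoly n m px) (agree_tr n m f)) /px coefCM coefXM.
case: n => [|n] //=; rewrite agree_tr //.
Qed.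
Lemma byE f n m : bmul by_ f n m = if m is m'.+1 then f n m' else 0.
Proof.
rewrite (bmul_agree (agree_bpoly n m py) (agree_tr n m f)) /py coefXM.
case: m => [|m] //=; first by rewrite coef0.
rewrite agree_tr //.
Qed.
Lemma by_inj f : bmul by_ f = bzero -> f = bzero.
Proof.
move=> h; apply: bfunext => n m.
by have := congr1 (fun F => F n m.+1) h; rewrite byE.
Qed.

Definition uone : user := upoly 1.
Definition uopp (f : user) : user := fun n => - f n.
Definition usub (f g : user) : user := uadd f (uopp g).
Definition utr n (f : user) : {poly rat} := \poly_(i < n.+1) f i.
Definition uagree n (A : {poly rat}) (f : user) := forall i, (i <= n)%N -> A`_i = f i.
Lemma uagree_tr n f : uagree n (utr n f) f.
Proof. by move=> i hi; rewrite /utr coef_poly ltnS hi. Qed.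
Lemma uagree_upoly n p : uagree n p (upoly p).
Proof. by []. Qed.
Arguments uagree_tr : clear implicits.
Arguments uagree_upoly : clear implicits.
Lemma umul_agree n A B f g : uagree n A f -> uagree n B g -> umul f g n = (A * B)`_n.
Proof.
move=> hA hB; rewrite coefM /umul; apply: eq_bigr => i _.
rewrite hA ?hB //; try exact: leq_subr; rewrite -ltnS; exact: ltn_ord.
Qed.
Lemma uagree_mul n A B f g : uagree n A f -> uagree n B g -> uagree n (A * B) (umul f g).
Proof.
move=> hA hB i hi; symmetry; apply: umul_agree => j hj.
  by apply: hA; exact: leq_trans hi.
by apply: hB; exact: leq_trans hi.
Qed.
Lemma uagree_add n A B f g : uagree n A f -> uagree n B g -> uagree n (A + B) (uadd f g).
Proof. by move=> hA hB i hi; rewrite !coefD hA ?hB. Qed.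
Lemma ufunext (f g : user) : (forall n, f n = g n) -> f = g.
Proof. move=> h; apply: functional_extensionality => n; exact: h. Qed.
Lemma umulC f g : umul f g = umul g f.
Proof.
apply: ufunext => n.
by rewrite (umul_agree (uagree_tr n f) (uagree_tr n g)) (umul_agree (uagree_tr n g) (uagree_tr n f)) mulrC.
Qed.
Lemma umulA f g h : umul f (umul g h) = umul (umul f g) h.
Proof.
apply: ufunext => n.
rewrite (umul_agree (uagree_tr n f) (uagree_mul (uagree_tr n g) (uagree_tr n h))).
by rewrite (umul_agree (uagree_mul (uagree_tr n f) (uagree_tr n g)) (uagree_tr n h)) mulrA.
Qed.
Lemma umul1 f : umul uone f = f.
Proof.
apply: ufunext => n.
by rewrite (umul_agree (uagree_upoly n 1) (uagree_tr n f)) mul1r uagree_tr.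
Qed.
Lemma umulDl f g h : umul (uadd f g) h = uadd (umul f h) (umul g h).
Proof.
apply: ufunext => n.
rewrite (umul_agree (uagree_add (uagree_tr n f) (uagree_tr n g)) (uagree_tr n h)).
by rewrite /uadd (umul_agree (uagree_tr n f) (uagree_tr n h)) (umul_agree (uagree_tr n g) (uagree_tr n h)) mulrDl !coefD.
Qed.
Lemma user_rt : ring_theory uzero uone uadd umul usub uopp (@eq user).
Proof.
split.
- by move=> f; apply: ufunext => n; rewrite /uadd /uzero add0r.
- by move=> f g; apply: ufunext => n; rewrite /uadd addrC.
- by move=> f g h; apply: ufunext => n; rewrite /uadd addrA.
- exact: umul1.
- exact: umulC.
- exact: umulA.
- exact: umulDl.
- by [].
- by move=> f; apply: ufunext => n; rewrite /uadd /uopp /uzero subrr.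
Qed.
Add Ring user_ring : user_rt.
Lemma upolyM p q : upoly (p * q) = umul (upoly p) (upoly q).
Proof. by apply: ufunext => n; rewrite (umul_agree (uagree_upoly n p) (uagree_upoly n q)). Qed.
Lemma upolyD p q : upoly (p + q) = uadd (upoly p) (upoly q).
Proof. by apply: ufunext => n; rewrite /upoly coefD. Qed.
Lemma upolyN p : upoly (- p) = uopp (upoly p).
Proof. by apply: ufunext => n; rewrite /upoly coefN. Qed.
Lemma upolyB p q : upoly (p - q) = usub (upoly p) (upoly q).
Proof. by rewrite upolyD upolyN. Qed.
Lemma upoly_inj p : upoly p = uzero -> p = 0.
Proof.
move=> h; apply/polyP => n.
by rewrite coef0; have := congr1 (fun F => F n) h.
Qed.
Definition ux := upoly 'X.
Lemma uxE f n : umul ux f n = if n is n'.+1 then f n' else 0.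
Proof.
rewrite (umul_agree (uagree_upoly n 'X) (uagree_tr n f)) coefXM.
case: n => [|n] //=; rewrite uagree_tr //.
Qed.
Lemma ux_inj f : umul ux f = uzero -> f = uzero.
Proof.
move=> h; apply: ufunext => n.
by have := congr1 (fun F => F n.+1) h; rewrite uxE.
Qed.


Lemma mx2M (a b c d e f g h : int) :
  mx2 a b c d *m mx2 e f g h = mx2 (a*e+b*g) (a*f+b*h) (c*e+d*g) (c*f+d*h).
Proof.
apply/matrixP => i j; rewrite !mxE !big_ord_recl big_ord0 !mxE.
case: i => [[|[|i]] Hi] //=; case: j => [[|[|j]] Hj] //=; by rewrite addr0.
Qed.
Lemma mx2_1 : (1%:M : 'M[int]_2) = mx2 1 0 0 1.
Proof.
apply/matrixP => i j; rewrite !mxE.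
by case: i => [[|[|i]] Hi] //; case: j => [[|[|j]] Hj].
Qed.
Lemma mx2N (a b c d : int) : - mx2 a b c d = mx2 (-a) (-b) (-c) (-d).
Proof.
apply/matrixP => i j; rewrite !mxE.
by case: i => [[|[|i]] Hi] //; case: j => [[|[|j]] Hj].
Qed.
Lemma mx2_inj (a b c d a' b' c' d' : int) : mx2 a b c d = mx2 a' b' c' d' ->
  [/\ a = a', b = b', c = c' & d = d'].
Proof.
move=> h.
have e := fun (i j : 'I_2) => congr1 (fun M : 'M[int]_2 => M i j) h.
have := e ord0 ord0; have := e ord0 ord_max; have := e ord_max ord0; have := e ord_max ord_max.
by rewrite !mxE /=.
Qed.
Lemma mx2_eq (a b c d a' b' c' d' : int) : a = a' -> b = b' -> c = c' -> d = d' ->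
  mx2 a b c d = mx2 a' b' c' d'.
Proof. by move=> -> -> -> ->. Qed.

Inductive syl := sS | sU1 | sU2.
Definition stack := seq syl.
Definition step (st : stack) (b : bool) : stack :=
  if b then match st with sU1 :: r => sU2 :: r | sU2 :: r => r | _ => sU1 :: st end
  else match st with sS :: r => r | _ => sS :: st end.
Definition syl_mx (s : syl) : 'M[int]_2 :=
  match s with sS => matS | sU1 => matU | sU2 => matU *m matU end.
Fixpoint elt (st : stack) : 'M[int]_2 :=
  if st is s :: r then elt r *m syl_mx s else 1%:M.
Definition pm (M N : 'M[int]_2) := M = N \/ M = - N.

Lemma pm_refl M : pm M M. Proof. by left. Qed.
Lemma pm_trans M N K : pm M N -> pm N K -> pm M K.
Proof.
by case=> ->; case=> ->; [left|right|right|left; rewrite opprK].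
Qed.
Lemma pm_mulr M N P : pm M N -> pm (M *m P) (N *m P).
Proof. by case=> ->; [left|right; rewrite mulNmx]. Qed.

Lemma UU : matU *m matU = mx2 (-1) (-1) 1 0.
Proof. rewrite /matU mx2M; apply: mx2_eq; lia. Qed.
Lemma UUU : matU *m matU *m matU = - 1%:M.
Proof. rewrite UU /matU mx2M mx2_1 mx2N; apply: mx2_eq; lia. Qed.
Lemma SS : matS *m matS = - 1%:M.
Proof. rewrite /matS mx2M mx2_1 mx2N; apply: mx2_eq; lia. Qed.

Lemma step_elt st b : pm (elt (step st b)) (elt st *m letter_mx b).
Proof.
case: b => /=; case: st => [|[] r] /=; try exact: pm_refl.
- by left; rewrite mulmxA.
- by right; rewrite -!mulmxA (mulmxA matU) UUU mulmxN mulmx1 opprK.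
- by right; rewrite -mulmxA SS mulmxN mulmx1 opprK.
Qed.

Lemma run_elt st w : pm (elt (foldl step st w)) (elt st *m word_mx w).
Proof.
elim: w st => [|b w IH] st /=; first by rewrite mulmx1; exact: pm_refl.
apply: pm_trans (IH _) _; rewrite mulmxA; apply: pm_mulr; exact: step_elt.
Qed.

Lemma mx2Z (s a b c d : int) : s *: mx2 a b c d = mx2 (s*a) (s*b) (s*c) (s*d).
Proof.
apply/matrixP => i j; rewrite !mxE.
by case: i => [[|[|i]] Hi] //=; case: j => [[|[|j]] Hj].
Qed.

Definition typ (s : syl) : bool := if s is sS then false else true.
Fixpoint alt (st : stack) : bool :=
  match st with s :: ((s' :: _) as r) => (typ s != typ s') && alt r | _ => true end.

Lemma alt_cons s r : alt (s :: r) -> alt r.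
Proof. by case: r => [|s' r] //= /andP[]. Qed.

Lemma alt_step st b : alt st -> alt (step st b).
Proof.
case: b; case: st => [|s r] //=; case: s => //=; case: r => [|s' r] //=;
  try (by case: s'); move/andP=> [_ h]; exact: h.
Qed.

Definition Upow (a : nat) : 'M[int]_2 :=
  match a with 0 => mx2 1 0 0 1 | 1 => mx2 0 (-1) 1 1 | _ => mx2 (-1) (-1) 1 0 end.
Definition Spow (b : bool) : 'M[int]_2 := if b then mx2 0 (-1) 1 0 else mx2 1 0 0 1.
Definition sgn (e : bool) : int := if e then -1 else 1.

Lemma elt_cons s r : elt (s :: r) = elt r *m syl_mx s. Proof. by []. Qed.

Definition Inv (st : stack) : Prop :=
  exists (e : bool) (a : nat) (b : bool) (k : nat) (w1 w2 w3 w4 : int),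
    (0 <= w1) /\ (0 <= w2) /\ (0 <= w3) /\ (0 <= w4) /\ (1 <= w1 + w3) /\ (1 <= w2 + w4) /\
    ((k + 2)%:Z <= w1 + w2 + w3 + w4) /\ (a < 3)%N /\
    (b = if st is sS :: _ then true else false) /\
    (size st = 2 * k + (a != 0%N) + b)%N /\
    elt st = sgn e *: (Upow a *m mx2 w1 w2 w3 w4 *m Spow b).

Lemma inv_alt st : alt st -> st <> [::] -> Inv st.
Proof.
elim: st => [|s r IH] // halt _.
case: r IH halt => [|s' r] IH halt.
  case: s {halt}.
  - exists false, 0%N, true, 0%N, 1, 0, 0, 1; repeat match goal with |- _ /\ _ => split end => //.
    rewrite /= /Upow /Spow /sgn /matS mx2_1 !mx2M mx2Z; apply: mx2_eq; lia.
  - exists false, 1%N, false, 0%N, 1, 0, 0, 1; repeat match goal with |- _ /\ _ => split end => //.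
    rewrite /= /Upow /Spow /sgn /matU mx2_1 !mx2M mx2Z; apply: mx2_eq; lia.
  - exists false, 2%N, false, 0%N, 1, 0, 0, 1; repeat match goal with |- _ /\ _ => split end => //.
    rewrite /= /Upow /Spow /sgn /matU mx2_1 !mx2M mx2Z; apply: mx2_eq; lia.
move: halt => /= /andP[hty halt].
have [e [a [b [k [w1 [w2 [w3 [w4 [h1 [h2 [h3 [h4 [h5 [h6 [h7 [ha [hb [hsz hel]]]]]]]]]]]]]]]]]] :=
  IH halt (fun h => ltac:(discriminate h)); clear IH halt.
case: s hty => hty.
-
  move: hb hsz hel; case: s' hty => //= _ -> hsz hel;
  (exists e, a, true, k, w1, w2, w3, w4; repeat match goal with |- _ /\ _ => split end => //; first by move: hsz => /= hsz; rewrite /=; lia);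
  rewrite /= hel;
  case: a ha {hsz hel} => [|[|[|a]]] // _; rewrite /Upow /Spow /sgn /matS;
      case: e; rewrite !mx2M !mx2Z !mx2M; apply: mx2_eq; lia.
-
  case: s' hty hb hsz hel => // _ hb hsz hel; subst b.
  exists (~~ e), a, false, k.+1, w1, (w1 + w2), w3, (w3 + w4); repeat match goal with |- _ /\ _ => split end => //; try lia.
  move: hsz => /= hsz; rewrite /=; lia.
  rewrite elt_cons hel /=.
  case: a ha {hsz hel} => [|[|[|a]]] // _; rewrite /Upow /Spow /sgn /matS /matU;
    case: e; rewrite !mx2M !mx2Z !mx2M; apply: mx2_eq; lia.
-
  case: s' hty hb hsz hel => // _ hb hsz hel; subst b.
  exists (~~ e), a, false, k.+1, (w1 + w2), w2, (w3 + w4), w4; repeat match goal with |- _ /\ _ => split end => //; try lia.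
  move: hsz => /= hsz; rewrite /=; lia.
  rewrite elt_cons hel /=.
  case: a ha {hsz hel} => [|[|[|a]]] // _; rewrite /Upow /Spow /sgn /matS /matU;
    case: e; rewrite !mx2M !mx2Z !mx2M; apply: mx2_eq; lia.
Qed.

Lemma inv_not1 st : Inv st -> st <> [::] -> ~ pm (elt st) 1%:M.
Proof.
move=> [e [a [b [k [w1 [w2 [w3 [w4 [h1 [h2 [h3 [h4 [h5 [h6 [h7 [ha [hb [hsz hel]]]]]]]]]]]]]]]]]] hne.
have hpos : (0 < size st)%N by case: st hne {hb hsz hel} => // _ _ _.
rewrite /pm hel mx2_1 mx2N; clear hel hb.
case: a ha hsz => [|[|[|a]]] // _ hsz; case: e; case: b hsz => hsz;
  rewrite /Upow /Spow /sgn !mx2M !mx2Z;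
  case=> /mx2_inj [] ? ? ? ?; lia.
Qed.

Lemma alt_run st w : alt st -> alt (foldl step st w).
Proof. by elim: w st => [|b w IH] st //= h; apply: IH; apply: alt_step. Qed.

Lemma trivial_run w : trivial_word w = nilp (foldl step [::] w).
Proof.
have := run_elt [::] w; rewrite /= mul1mx.
case E: (foldl step [::] w) => [|s r] /=.
  rewrite /trivial_word => -[] h; apply/orP.
    by left; rewrite -h.
  by right; rewrite h opprK.
move=> hpm; apply/negP; rewrite /trivial_word => /orP[] /eqP h.
  apply: (inv_not1 (st := s :: r)) => //.
    by apply: inv_alt => //; rewrite -E; apply: alt_run.
  by rewrite h in hpm.
apply: (inv_not1 (st := s :: r)) => //.
  by apply: inv_alt => //; rewrite -E; apply: alt_run.
rewrite h in hpm; rewrite elt_cons; case: hpm => ->; [by right| by left; rewrite opprK].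
Qed.
Arguments step : simpl never.


Fixpoint allw k : seq (seq bool) :=
  if k is k'.+1 then map (cons true) (allw k') ++ map (cons false) (allw k') else [:: [::]].

Lemma cons_inj (b : bool) : injective (cons b).
Proof. by move=> x y []. Qed.

Lemma mem_allw k w : (w \in allw k) = (size w == k).
Proof.
elim: k w => [|k IH] w; first by case: w.
rewrite mem_cat; case: w => [|b w] /=.
  by apply/norP; split; apply/mapP => -[].
rewrite eqSS -IH; case: b.
  by rewrite (mem_map (@cons_inj true)); case: (_ \in _) => //=; apply/mapP => -[].
rewrite (mem_map (@cons_inj false)) orbC.
by case: (_ \in _) => //=; apply/mapP => -[].
Qed.

Lemma uniq_allw k : uniq (allw k).
Proof.
elim: k => [|k IH] //=.
rewrite cat_uniq !map_inj_uniq ?IH //=; try by move=> x y [].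
rewrite andbT; apply/hasPn => w /mapP[y _ ->]; by apply/mapP => -[x _].
Qed.

Lemma card_allw k (P : pred (seq bool)) :
  #|[pred w : k.-tuple bool | P w]| = count P (allw k).
Proof.
rewrite cardE /enum_mem size_filter -enumT.
rewrite -[LHS]/(count (preim val P) _) -count_map.
apply/permP: P; apply: uniq_perm.
- by rewrite map_inj_uniq ?enum_uniq //; exact: val_inj.
- exact: uniq_allw.
move=> w; rewrite mem_allw; apply/mapP/idP => [[t _ ->]|/eqP hw].
  by rewrite size_tuple.
by exists (Tuple (introT eqP hw)); rewrite ?mem_enum.
Qed.

Fixpoint ok (abs : bool) (st : stack) (w : seq bool) : bool :=
  match w with
  | [::] => nilp st
  | b :: w' => (~~ abs || ~~ nilp st) && ok abs (step st b) w'
  end.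

Definition Wn abs st n m := count (fun w => (count id w == n) && ok abs st w) (allw (n + m)).

Lemma count_big k n (Pr : pred (seq bool)) : (k < n)%N ->
  count (fun w => (count id w == n) && Pr w) (allw k) = 0%N.
Proof.
move=> hk; apply/eqP; rewrite -leqn0 leqNgt -has_count; apply/hasPn => w.
rewrite mem_allw => /eqP hw; apply/nandP; left.
have := count_size id w; rewrite hw => h; apply/eqP => e; rewrite e in h; lia.
Qed.

Lemma count_true k n (Pr : pred (seq bool)) :
  count (fun w => (count id (true :: w) == n) && Pr w) (allw k) =
  if n is n'.+1 then count (fun w => (count id w == n') && Pr w) (allw k) else 0%N.
Proof.
case: n => [|n].
  by apply/eqP; rewrite -leqn0 leqNgt -has_count; apply/hasPn => w _ /=.
by apply: eq_count => w /=; rewrite add1n eqSS.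
Qed.

Lemma count_false k n (Pr : pred (seq bool)) :
  count (fun w => (count id (false :: w) == n) && Pr w) (allw k) =
  count (fun w => (count id w == n) && Pr w) (allw k).
Proof. by apply: eq_count => w /=; rewrite add0n. Qed.

Lemma Wn_rec abs st n m : Wn abs st n m =
  ((n == 0%N) && (m == 0%N) && nilp st +
   (if ~~ abs || ~~ nilp st then
      (if n is n'.+1 then Wn abs (step st true) n' m else 0) +
      (if m is m'.+1 then Wn abs (step st false) n m' else 0)
    else 0))%N.
Proof.
rewrite /Wn; case E: (n + m)%N => [|k].
  have [-> ->] : n = 0%N /\ m = 0%N by lia.
  by rewrite /=; case: (~~ abs || ~~ nilp st).
have -> : (n == 0%N) && (m == 0%N) = false by apply/negP => /andP[/eqP h1 /eqP h2]; lia.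
rewrite (_ : allw k.+1 = map (cons true) (allw k) ++ map (cons false) (allw k)) // count_cat !count_map.
case Hc: (~~ abs || ~~ nilp st); last first.
  rewrite !(eq_count (a2 := pred0)) ?count_pred0 // => w /=; rewrite Hc andbF //.
rewrite (eq_count (a1 := preim _ _) (a2 := fun w => (count id (true :: w) == n) && ok abs (step st true) w)); last first.
  by move=> w /=; rewrite Hc.
rewrite (eq_count (a1 := preim _ _) (a2 := fun w => (count id (false :: w) == n) && ok abs (step st false) w)); last first.
  by move=> w /=; rewrite Hc.
rewrite count_true count_false /= add0n.
congr (_ + _)%N.
  by case: n E => [|n] E //; have -> : k = (n + m)%N by lia.
case: m E => [|m] E.
  by apply: count_big; lia.
by have -> : k = (n + m)%N by lia.
Qed.

Definition Wser abs st : bser := fun n m => (Wn abs st n m)%:R.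

Lemma bone_E n m : bone n m = ((n == 0%N) && (m == 0%N))%:R.
Proof.
rewrite /bone /bpoly coef1; case: m => [|m] /=; last by rewrite andbF mulr0n coef0.
by rewrite andbT mulr1n coef1.
Qed.

Lemma Wser_rec abs st : Wser abs st =
  badd (if nilp st then bone else bzero)
       (if ~~ abs || ~~ nilp st then
          badd (bmul bx (Wser abs (step st true))) (bmul by_ (Wser abs (step st false)))
        else bzero).
Proof.
apply: bfunext => n m; rewrite /Wser Wn_rec natrD /badd.
congr (_ + _).
  case: (nilp st); rewrite ?bone_E ?andbT ?andbF //.
case: (~~ abs || ~~ nilp st) => //.
by rewrite bxE byE natrD; case: n => [|n]; case: m => [|m].
Qed.

Lemma step_cat s t r b : step (s :: t ++ r) b = step (s :: t) b ++ r.
Proof. by case: b; case: s. Qed.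

Lemma Wser_nil_true : Wser true [::] = bone.
Proof. rewrite Wser_rec /=; ring. Qed.

Lemma Wser_cat abs st r : Wser abs (st ++ r) = bmul (Wser true st) (Wser abs r).
Proof.
apply: bfunext => n m.
have [k hk] : exists k, (n + m <= k)%N by exists (n + m)%N.
elim: k n m st hk => [|k IH] n m [|s t] hk.
- by rewrite Wser_nil_true bmul1.
- have [-> ->] : n = 0%N /\ m = 0%N by lia.
  rewrite cat_cons Wser_rec [Wser true _]Wser_rec /=.
  have -> : forall f g h : bser, bmul (badd bzero (badd (bmul bx f) (bmul by_ g))) h =
    badd (bmul bx (bmul f h)) (bmul by_ (bmul g h)) by move=> f g h; ring.
  by rewrite orbT /badd /bzero !bxE !byE !addr0.
- by rewrite Wser_nil_true bmul1.
- rewrite cat_cons Wser_rec [Wser true _]Wser_rec /= !step_cat.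
  have -> : forall f g h : bser, bmul (badd bzero (badd (bmul bx f) (bmul by_ g))) h =
    badd (bmul bx (bmul f h)) (bmul by_ (bmul g h)) by move=> f g h; ring.
  rewrite /badd orbT /= !bxE !byE add0r.
  congr (_ + _).
    by case: n hk => [|n] hk //; apply: IH; lia.
  by case: m hk => [|m] hk //; apply: IH; lia.
Qed.

Definition WTn abs st k := count (ok abs st) (allw k).

Lemma WTn_rec abs st k : WTn abs st k =
  ((k == 0%N) && nilp st +
   (if ~~ abs || ~~ nilp st then
      (if k is k'.+1 then WTn abs (step st true) k' + WTn abs (step st false) k' else 0)
    else 0))%N.
Proof.
rewrite /WTn; case: k => [|k] /=.
  by case: (~~ abs || ~~ nilp st).
rewrite count_cat !count_map add0n.
case Hc: (~~ abs || ~~ nilp st); last first.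
  by rewrite !(eq_count (a2 := pred0)) ?count_pred0 // => w /=; rewrite Hc.
by congr (_ + _)%N; apply: eq_count => w /=; rewrite Hc.
Qed.

Definition WTser abs st : user := fun k => (WTn abs st k)%:R.

Lemma uone_E k : uone k = (k == 0%N)%:R.
Proof. by rewrite /uone /upoly coef1. Qed.

Lemma WTser_rec abs st : WTser abs st =
  uadd (if nilp st then uone else uzero)
       (if ~~ abs || ~~ nilp st then
          umul ux (uadd (WTser abs (step st true)) (WTser abs (step st false)))
        else uzero).
Proof.
apply: ufunext => k; rewrite /WTser WTn_rec natrD /uadd.
congr (_ + _).
  case: (nilp st); rewrite ?uone_E ?andbT ?andbF //.
case: (~~ abs || ~~ nilp st) => //.
by rewrite uxE; case: k => [|k] //; rewrite /uadd natrD.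
Qed.

Lemma WTser_nil_true : WTser true [::] = uone.
Proof. rewrite WTser_rec /=; ring. Qed.

Lemma WTser_cat abs st r : WTser abs (st ++ r) = umul (WTser true st) (WTser abs r).
Proof.
apply: ufunext => n.
elim: n st => [|n IH] [|s t].
- by rewrite WTser_nil_true umul1.
- rewrite cat_cons WTser_rec [WTser true _]WTser_rec /=.
  have -> : forall f g h : user, umul (uadd uzero (umul ux (uadd f g))) h =
    umul ux (uadd (umul f h) (umul g h)) by move=> f g h; ring.
  by rewrite /uadd /uzero orbT /= !uxE addr0.
- by rewrite WTser_nil_true umul1.
- rewrite cat_cons WTser_rec [WTser true _]WTser_rec /= !step_cat.
  have -> : forall f g h : user, umul (uadd uzero (umul ux (uadd f g))) h =
    umul ux (uadd (umul f h) (umul g h)) by move=> f g h; ring.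
  by rewrite /uadd /uzero orbT /= !uxE add0r /uadd !IH.
Qed.


Section Alg.
Variable R : Type. Variables (rO rI : R) (radd rmul rsub : R -> R -> R) (ropp : R -> R).
Hypothesis rt : ring_theory rO rI radd rmul rsub ropp (@eq R).
Add Ring Rring : rt.
Local Infix "+" := radd.
Local Infix "*" := rmul.
Local Infix "-" := rsub.
Local Notation "0" := rO.
Local Notation "1" := rI.

Lemma elim_cubic (x y Q a g1 g2 c3 c2 c1 : R) :
  Q = 1 + x*(g1*Q) + y*(a*Q) ->
  a = x*(g1*a) + y*1 ->
  g1 = x*g2 + y*(a*g1) ->
  g2 = x*1 + y*(a*g2) ->
  c3 = y*y*y*y*y*y - x*x*x*x*x*x + (1+1+1+1+1+1)*(y*y)*(x*x*x) - (1+1+1)*(y*y*y*y)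
       + (1+1)*(x*x*x) + (1+1+1)*(y*y) - 1 ->
  c2 = x*x*x*(y*y) - y*y*y*y + x*x*x + (1+1)*(y*y) - 1 ->
  c1 = x*x*x - y*y + 1 ->
  Q*Q*(y*y)*(c3*(Q*Q*Q) + c2*(Q*Q) + c1*Q + 1) = 0.
Proof.
move=> H1 H2 H3 H4 -> -> ->.
set A := y*a. set B := x*g1.
have r1 : Q - (1 + B*Q + A*Q) = 0 by rewrite /A /B {1}H1; ring.
have r2 : A - (y*y + B*A) = 0 by rewrite /A /B {1}H2; ring.
have r3 : g1 - (x*g2 + A*g1) = 0 by rewrite /A {1}H3; ring.
have r4 : g2 - (x + A*g2) = 0 by rewrite /A {1}H4; ring.
have e2 : B*((1-A)*(1-A)) - x*x*x = 0.
  transitivity (x*(1-A)*(g1 - (x*g2 + A*g1)) + x*x*(g2 - (x + A*g2))); first by rewrite /B; ring.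
  rewrite r3 r4; ring.
have HC : (1-A)*(1-A)*(y*y - A) + x*x*x*A = 0.
  transitivity (0 - (A*(B*((1-A)*(1-A)) - x*x*x) + (1-A)*(1-A)*(A - (y*y + B*A)))); first ring.
  rewrite e2 r2; ring.
have HL : Q*(A*A) + A - Q*(y*y) = 0.
  transitivity (Q*(A - (y*y + B*A)) - A*(Q - (1 + B*Q + A*Q))); first ring.
  rewrite r1 r2; ring.
set P := Q*Q*(x*x*x - 1 - (1+1+1)*(y*y)) - Q*((1+1) + y*y) - 1.
set R0 := Q*(y*y)*(1 + (1+1+1)*Q + Q*(y*y)).
set al := 1 + (1+1)*Q - Q*A + y*y*Q.
transitivity (P*P*(Q*(A*A) + A - Q*(y*y)) + (Q*(R0 - A*P) - P)*(Q*Q*((1-A)*(1-A)*(y*y - A) + x*x*x*A) - al*(Q*(A*A) + A - Q*(y*y)))).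
  rewrite /P /R0 /al; ring.
rewrite HC HL; ring.
Qed.
End Alg.

Lemma ok_run st w : ok false st w = nilp (foldl step st w).
Proof. by elim: w st => [|b w IH] st //=. Qed.

Lemma Qser_W : Qser = Wser false [::].
Proof.
apply: bfunext => n m; rewrite /Qser /Wser /q (card_allw (n + m) (fun s => (count id s == n) && trivial_word s)) /Wn.
by congr (_%:R); apply: eq_count => w; rewrite ok_run trivial_run.
Qed.

Lemma Tser_W : Tser = WTser false [::].
Proof.
apply: ufunext => n; rewrite /Tser /WTser /t (card_allw n trivial_word) /WTn.
by congr (_%:R); apply: eq_count => w; rewrite ok_run trivial_run.
Qed.

Definition bpow (f : bser) n := iter n (bmul f) bone.
Lemma bpolyX p n : bpoly (p ^+ n) = bpow (bpoly p) n.
Proof. elim: n => [|n IH]; first by rewrite expr0. by rewrite exprS bpolyM IH. Qed.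
Definition bnat n := iter n (badd bone) bzero.
Lemma bpoly_nat n : bpoly n%:R = bnat n.
Proof. elim: n => [|n IH]; first by rewrite bpoly0. by rewrite mulrS bpolyD IH. Qed.

Definition upow (f : user) n := iter n (umul f) uone.
Lemma upolyX p n : upoly (p ^+ n) = upow (upoly p) n.
Proof. elim: n => [|n IH]; first by rewrite expr0. by rewrite exprS upolyM IH. Qed.
Definition unat n := iter n (uadd uone) uzero.
Lemma upoly0 : upoly 0 = uzero.
Proof. by apply: ufunext => n; rewrite /upoly coef0. Qed.
Lemma upoly_nat n : upoly n%:R = unat n.
Proof. elim: n => [|n IH]; first by rewrite upoly0. by rewrite mulrS upolyD IH. Qed.

Lemma step_nil_t : step [::] true = [:: sU1] ++ [::]. Proof. by []. Qed.
Lemma step_nil_f : step [::] false = [:: sS] ++ [::]. Proof. by []. Qed.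
Lemma step_S_t : step [:: sS] true = [:: sU1] ++ [:: sS]. Proof. by []. Qed.
Lemma step_S_f : step [:: sS] false = [::]. Proof. by []. Qed.
Lemma step_U1_t : step [:: sU1] true = [:: sU2]. Proof. by []. Qed.
Lemma step_U1_f : step [:: sU1] false = [:: sS] ++ [:: sU1]. Proof. by []. Qed.
Lemma step_U2_t : step [:: sU2] true = [::]. Proof. by []. Qed.
Lemma step_U2_f : step [:: sU2] false = [:: sS] ++ [:: sU2]. Proof. by []. Qed.

Definition aW := Wser true [:: sS].
Definition g1W := Wser true [:: sU1].
Definition g2W := Wser true [:: sU2].

Lemma Qcubic_main : bcubic cQ3 cQ2 cQ1 cQ0 Qser = bzero.
Proof.
have H1 : Qser = badd (badd bone (bmul bx (bmul g1W Qser))) (bmul by_ (bmul aW Qser)).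
  rewrite {1}Qser_W Wser_rec /= step_nil_t step_nil_f !Wser_cat -Qser_W /g1W /aW; ring.
have H2 : aW = badd (bmul bx (bmul g1W aW)) (bmul by_ bone).
  rewrite {1}/aW Wser_rec /= step_S_t step_S_f Wser_cat Wser_nil_true /g1W /aW; ring.
have H3 : g1W = badd (bmul bx g2W) (bmul by_ (bmul aW g1W)).
  rewrite {1}/g1W Wser_rec /= step_U1_t step_U1_f Wser_cat /g1W /g2W /aW; ring.
have H4 : g2W = badd (bmul bx bone) (bmul by_ (bmul aW g2W)).
  rewrite {1}/g2W Wser_rec /= step_U2_t step_U2_f Wser_cat Wser_nil_true /g2W /aW; ring.
have hE := elim_cubic bser_rt H1 H2 H3 H4 erefl erefl erefl.
have hQi : bmul Qser (bsub (bsub bone (bmul bx g1W)) (bmul by_ aW)) = bone.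
  transitivity (bsub Qser (badd (bmul bx (bmul g1W Qser)) (bmul by_ (bmul aW Qser)))); first ring.
  rewrite {1}H1; ring.
rewrite /bcubic /cQ3 /cQ2 /cQ1 /cQ0 !bpolyB !bpolyD !bpolyN !bpolyM !bpoly_nat -/bone -/bx -/by_ /bnat /=.
set Z := badd _ _.
set Qi := bsub (bsub bone (bmul bx g1W)) (bmul by_ aW) in hQi.
have hZ : bmul by_ (bmul by_ Z) = bzero.
  transitivity (bmul (bmul (bmul Qser Qi) (bmul Qser Qi)) (bmul by_ (bmul by_ Z))); first by rewrite hQi; ring.
  match type of hE with bmul ?P ?C = _ =>
    have hZC : Z = C by rewrite /Z; ring
  end.
  rewrite hZC.
  transitivity (bmul (bmul Qi Qi) (bmul (bmul (bmul Qser Qser) (bmul by_ by_)) (badd (badd (badd (bmul (bsub (badd (badd (bsub (badd (bsub (bmul (bmul (bmul (bmul (bmul by_ by_) by_) by_) by_) by_) (bmul (bmul (bmul (bmul (bmul bx bx) bx) bx) bx) bx)) (bmul (bmul (badd (badd (badd (badd (badd bone bone) bone) bone) bone) bone) (bmul by_ by_)) (bmul (bmul bx bx) bx))) (bmul (badd (badd bone bone) bone) (bmul (bmul (bmul by_ by_) by_) by_))) (bmul (badd bone bone) (bmul (bmul bx bx) bx))) (bmul (badd (badd bone bone) bone) (bmul by_ by_))) bone) (bmul (bmul Qser Qser) Qser)) (bmul (bsub (badd (badd (bsub (bmul (bmul (bmul bx bx) bx) (bmul by_ by_)) (bmul (bmul (bmul by_ by_) by_) by_)) (bmul (bmul bx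 bx) bx)) (bmul (badd bone bone) (bmul by_ by_))) bone) (bmul Qser Qser))) (bmul (badd (bsub (bmul (bmul bx bx) bx) (bmul by_ by_)) bone) Qser)) bone))).
    ring.
  rewrite hE; ring.
by apply: by_inj; apply: by_inj.
Qed.

Definition aT := WTser true [:: sS].
Definition g1T := WTser true [:: sU1].
Definition g2T := WTser true [:: sU2].

Lemma Tcubic_main : ucubic cT3 cT2 cT1 cT0 Tser = uzero.
Proof.
have H1 : Tser = uadd (uadd uone (umul ux (umul g1T Tser))) (umul ux (umul aT Tser)).
  rewrite {1}Tser_W WTser_rec /= step_nil_t step_nil_f !WTser_cat -Tser_W /g1T /aT; ring.
have H2 : aT = uadd (umul ux (umul g1T aT)) (umul ux uone).
  rewrite {1}/aT WTser_rec /= step_S_t step_S_f WTser_cat WTser_nil_true /g1T /aT; ring.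
have H3 : g1T = uadd (umul ux g2T) (umul ux (umul aT g1T)).
  rewrite {1}/g1T WTser_rec /= step_U1_t step_U1_f WTser_cat /g1T /g2T /aT; ring.
have H4 : g2T = uadd (umul ux uone) (umul ux (umul aT g2T)).
  rewrite {1}/g2T WTser_rec /= step_U2_t step_U2_f WTser_cat WTser_nil_true /g2T /aT; ring.
have hE := elim_cubic user_rt H1 H2 H3 H4 erefl erefl erefl.
have hQi : umul Tser (usub (usub uone (umul ux g1T)) (umul ux aT)) = uone.
  transitivity (usub Tser (uadd (umul ux (umul g1T Tser)) (umul ux (umul aT Tser)))); first ring.
  rewrite {1}H1; ring.
rewrite /ucubic /cT3 /cT2 /cT1 /cT0 !upolyB !upolyD !upolyN !upolyM !upoly_nat -/uone -/ux /unat /=.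
set Z := uadd _ _.
set Qi := usub (usub uone (umul ux g1T)) (umul ux aT) in hQi.
have hZ : umul ux (umul ux Z) = uzero.
  transitivity (umul (umul (umul Tser Qi) (umul Tser Qi)) (umul ux (umul ux Z))); first by rewrite hQi; ring.
  match type of hE with umul ?P ?C = _ =>
    (have hZC : Z = C by rewrite /Z; ring);
    rewrite hZC; transitivity (umul (umul Qi Qi) (umul P C)); [ring | rewrite hE; ring]
  end.
by apply: ux_inj; apply: ux_inj.
Qed.


Ltac sring := ring.
From mathcomp Require Import ring.


Lemma mc_rt (P : comRingType) :
  ring_theory (0 : P) 1 +%R *%R (fun x y => x - y) -%R (@eq P).
Proof.
split => //.
- exact: add0r. - exact: addrC. - exact: addrA. - exact: mul1r.
- exact: mulrC. - exact: mulrA. - exact: mulrDl. - exact: subrr.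
Qed.

Definition Hh (P : comRingType) (c3 c2 c1 p s : P) :=
  c3 * (p * p * p) + c2 * (p * p * s) + c1 * (p * s * s) + s * s * s.

Section Deg.
Variable P : idomainType.
Variable R : Type. Variables (rO rI : R) (radd rmul rsub : R -> R -> R) (ropp : R -> R).
Hypothesis rt : ring_theory rO rI radd rmul rsub ropp (@eq R).
Add Ring Rring : rt.
Variable phi : P -> R.
Hypothesis phiD : forall p q, phi (p + q) = radd (phi p) (phi q).
Hypothesis phiM : forall p q, phi (p * q) = rmul (phi p) (phi q).
Hypothesis phiN : forall p, phi (- p) = ropp (phi p).
Hypothesis phi1 : phi 1 = rI.
Hypothesis phi_inj : forall p, phi p = rO -> p = 0.

Variables (c3 c2 c1 c0 : P) (F : R).
Hypothesis c0E : c0 = 1.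
Hypothesis c3nz : c3 != 0.
Hypothesis cub : radd (rmul (phi c3) (rmul F (rmul F F)))
   (radd (rmul (phi c2) (rmul F F)) (radd (rmul (phi c1) F) (phi c0))) = rO.
Hypothesis noroot : forall p s : P, s != 0 -> Hh c3 c2 c1 p s != 0.

Lemma phi0 : phi 0 = rO.
Proof.
have h : phi 0 = radd (phi 0) (phi 0) by rewrite -phiD addr0.
transitivity (rsub (radd (phi 0) (phi 0)) (phi 0)); first sring.
rewrite -h; sring.
Qed.

Lemma K (p s : P) : rmul (phi s) F = phi p -> s = 0.
Proof.
move=> hps; apply/eqP; apply/negPn/negP => hs.
move/negP: (noroot p hs); apply; apply/eqP; apply: phi_inj.
rewrite /Hh !phiD !phiM.
transitivity (radd (rmul (rmul (phi s) (rmul (phi s) (phi s)))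
   (radd (rmul (phi c3) (rmul F (rmul F F)))
   (radd (rmul (phi c2) (rmul F F)) (radd (rmul (phi c1) F) (phi c0)))))
   (rmul (rsub (phi p) (rmul (phi s) F))
     (radd (rmul (phi c3) (radd (rmul (phi p) (phi p)) (radd (rmul (phi p) (rmul (phi s) F)) (rmul (rmul (phi s) F) (rmul (phi s) F)))))
      (radd (rmul (phi c2) (rmul (phi s) (radd (phi p) (rmul (phi s) F))))
        (rmul (phi c1) (rmul (phi s) (phi s))))))).
  rewrite c0E phi1; sring.
rewrite cub -hps; sring.
Qed.

Lemma deg3 (a2 a1 a0 : P) :
  radd (rmul (phi a2) (rmul F F)) (radd (rmul (phi a1) F) (phi a0)) = rO ->
  [/\ a2 = 0, a1 = 0 & a0 = 0].
Proof.
move=> hq.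
have ha2 : a2 = 0.
  apply/eqP; apply/negPn/negP => ha2.
  have [d hd] : exists d, d = c2 * a2 - c3 * a1 by eexists.
  have [r1 hr1d] : exists r1, r1 = a2 * a2 * c1 - c3 * a2 * a0 - d * a1 by eexists.
  have [r0 hr0d] : exists r0, r0 = a2 * a2 - d * a0 by eexists.
  have hr : radd (rmul (phi r1) F) (phi r0) = rO.
    transitivity (rsub (rmul (rmul (phi a2) (phi a2))
       (radd (rmul (phi c3) (rmul F (rmul F F)))
       (radd (rmul (phi c2) (rmul F F)) (radd (rmul (phi c1) F) (phi c0)))))
       (rmul (radd (rmul (rmul (phi c3) (phi a2)) F) (phi d))
         (radd (rmul (phi a2) (rmul F F)) (radd (rmul (phi a1) F) (phi a0))))).
      rewrite hr1d hr0d hd c0E phi1 !(phiD, phiN, phiM); sring.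
    rewrite cub hq; sring.
  have hr1 : r1 = 0.
    apply: (K (p := - r0)); rewrite phiN.
    transitivity (rsub (radd (rmul (phi r1) F) (phi r0)) (phi r0)); first sring.
    rewrite hr; sring.
  have hr0 : r0 = 0.
    apply: phi_inj; transitivity (radd (rmul (phi r1) F) (phi r0)).
      rewrite hr1 phi0; sring.
    exact: hr.
  have hs : c3 * a2 != 0 by rewrite mulf_neq0.
  have e : a2 * a2 * Hh c3 c2 c1 (- d) (c3 * a2) =
    (c3 * a2 * (- d) + d * (c3 * a2)) * (a2 * ((- d) * (- d)) + a1 * ((- d) * (c3 * a2)) + a0 * ((c3 * a2) * (c3 * a2)))
    + (c3 * a2) * (c3 * a2) * (r1 * (- d) + r0 * (c3 * a2)).
    rewrite /Hh hr1d hr0d hd; ring.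
  rewrite hr1 hr0 in e; clear hr1d hr0d.
  have e2 : a2 * a2 * Hh c3 c2 c1 (- d) (c3 * a2) = 0 by rewrite e; ring.
  move/eqP: e2; rewrite !mulf_eq0 (negbTE ha2) /= => hH.
  by move/negP: (noroot (- d) hs); apply.
have ha1 : a1 = 0.
  apply: (K (p := - a0)); rewrite phiN.
  transitivity (rsub (radd (rmul (phi a2) (rmul F F)) (radd (rmul (phi a1) F) (phi a0))) (phi a0)).
    rewrite ha2 phi0; sring.
  rewrite hq; sring.
split => //; apply: phi_inj; rewrite -hq ha2 ha1 phi0; sring.
Qed.
End Deg.


Definition relZ (A B : int) := 7 * (A * A * A) + 2 * (A * A * B) + A * (B * B) + B * B * B.

Lemma int_noroot n : forall A B : int, (`|A| + `|B| <= n)%N -> relZ A B = 0 -> A = 0 /\ B = 0.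
Proof.
elim: n => [|n IH] A B hn hrel.
  by split; apply/eqP; rewrite -absz_eq0; apply/eqP; lia.
have hA := divz_eq A 2; have hB := divz_eq B 2.
have hra0 : 0 <= (A %% 2)%Z by apply: modz_ge0.
have hra1 : (A %% 2)%Z < 2 by apply: (ltz_mod A (d := 2)).
have hrb0 : 0 <= (B %% 2)%Z by apply: modz_ge0.
have hrb1 : (B %% 2)%Z < 2 by apply: (ltz_mod B (d := 2)).
move: hA hB hra0 hra1 hrb0 hrb1.
move: (A %/ 2)%Z (A %% 2)%Z (B %/ 2)%Z (B %% 2)%Z => a ra b rb hA hB ? ? ? ?.
have [ea|ea] : ra = 0 \/ ra = 1 by lia.
all: have [eb|eb] : rb = 0 \/ rb = 1 by lia.
all: subst A B ra rb.
- have e8 : relZ (a * 2 + 0) (b * 2 + 0) = 8 * relZ a b by rewrite /relZ; ring.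
  rewrite e8 in hrel.
  have hr : relZ a b = 0 by move/eqP: hrel; rewrite mulf_eq0 => /orP[] /eqP //.
  have hab : (`|a| + `|b| <= n)%N.
    move: hn; rewrite !addr0 !abszM /=.
    case: (boolP (a == 0)) => ha; case: (boolP (b == 0)) => hb.
    + by rewrite (eqP ha) (eqP hb).
    + have : (0 < `|b|)%N by rewrite absz_gt0.
      lia.
    + have : (0 < `|a|)%N by rewrite absz_gt0.
      lia.
    + have : (0 < `|a|)%N by rewrite absz_gt0.
      lia.
  have [-> ->] := IH a b hab hr.
  by split.
- exfalso; move: hrel.
  have -> : relZ (a * 2 + 0) (b * 2 + 1) = 2 * ((3%:Z * b) + (6%:Z * b*b) + (4%:Z * b*b*b) + (1%:Z * a) + (4%:Z * a*b) + (4%:Z * a*b*b) + (4%:Z * a*a) + (8%:Z * a*a*b) + (28%:Z * a*a*a)) + 1 by rewrite /relZ; ring.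
  move: (_ + _ + _ + _ + _ + _ + _ + _ + _) => y; lia.
- exfalso; move: hrel.
  have -> : relZ (a * 2 + 1) (b * 2 + 0) = 2 * ((2%:Z * b) + (2%:Z * b*b) + (4%:Z * b*b*b) + (21%:Z * a) + (8%:Z * a*b) + (4%:Z * a*b*b) + (42%:Z * a*a) + (8%:Z * a*a*b) + (28%:Z * a*a*a)) + 7 by rewrite /relZ; ring.
  move: (_ + _ + _ + _ + _ + _ + _ + _ + _) => y; lia.
- exfalso; move: hrel.
  have -> : relZ (a * 2 + 1) (b * 2 + 1) = 2 * ((7%:Z * b) + (8%:Z * b*b) + (4%:Z * b*b*b) + (26%:Z * a) + (12%:Z * a*b) + (4%:Z * a*b*b) + (46%:Z * a*a) + (8%:Z * a*a*b) + (28%:Z * a*a*a)) + 11 by rewrite /relZ; ring.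
  move: (_ + _ + _ + _ + _ + _ + _ + _ + _) => y; lia.
Qed.

Lemma rat_noroot (a b : rat) :
  7 * (a * a * a) + 2 * (a * a * b) + a * (b * b) + b * b * b = 0 -> a = 0 /\ b = 0.
Proof.
move=> h.
have da0 : ((denq a)%:~R : rat) != 0 by rewrite intr_eq0 denq_neq0.
have db0 : ((denq b)%:~R : rat) != 0 by rewrite intr_eq0 denq_neq0.
have key : ((relZ (numq a * denq b) (numq b * denq a))%:~R : rat) =
   ((denq a)%:~R * (denq b)%:~R) ^+ 3 *
   (7 * (a * a * a) + 2 * (a * a * b) + a * (b * b) + b * b * b).
  move: da0 db0 (esym (divq_num_den a)) (esym (divq_num_den b)).
  move: (numq a) (denq a) (numq b) (denq b) => na da nb db hda hdb -> ->.
  rewrite /relZ !rmorphD !rmorphM /=.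
  field; by rewrite hda hdb.
rewrite h mulr0 in key.
have hz : relZ (numq a * denq b) (numq b * denq a) = 0 by apply/eqP; rewrite -(intr_eq0 rat) key.
have [ha hb] := int_noroot (leqnn _) hz.
move/eqP: ha; rewrite mulf_eq0 (negbTE (denq_neq0 b)) orbF numq_eq0 => /eqP ->.
move/eqP: hb; rewrite mulf_eq0 (negbTE (denq_neq0 a)) orbF numq_eq0 => /eqP ->.
by [].
Qed.

Lemma Hh_horner (R : comRingType) (c3 c2 c1 p s : {poly R}) z :
  (Hh c3 c2 c1 p s).[z] = Hh c3.[z] c2.[z] c1.[z] p.[z] s.[z].
Proof. by rewrite /Hh !hornerE. Qed.

Lemma descent (R : idomainType) (z : R) (c3 c2 c1 : {poly R}) :
  (forall p s : {poly R}, (p.[z] != 0) || (s.[z] != 0) -> Hh c3 c2 c1 p s != 0) ->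
  forall p s, (p != 0) || (s != 0) -> Hh c3 c2 c1 p s != 0.
Proof.
move=> hb p s.
have [n hn] : exists n, (size p + size s <= n)%N by exists (size p + size s)%N.
elim: n p s hn => [|n IH] p s hn hps.
  move: hps; rewrite -!size_poly_gt0; lia.
case: (boolP ((p.[z] != 0) || (s.[z] != 0))) => hz; first exact: hb.
move: hz; rewrite negb_or !negbK => /andP[/eqP /rootP/factor_theorem [p' ep] /eqP /rootP/factor_theorem [s' es]].
have e : Hh c3 c2 c1 p s = ('X - z%:P) ^+ 3 * Hh c3 c2 c1 p' s' by rewrite ep es /Hh; ring.
rewrite e mulf_neq0 ?expf_neq0 ?polyXsubC_eq0 //.
have hps' : (p' != 0) || (s' != 0).
  by move: hps; rewrite ep es; case: (boolP (p' == 0)) => [/eqP ->|//]; rewrite mul0r eqxx /=; case: (boolP (s' == 0)) => [/eqP ->|//]; rewrite mul0r eqxx.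
suff hsz : (size p' + size s' <= n)%N by exact: IH hsz hps'.
have szp : size p = (if p' == 0%R then 0 else (size p').+1)%N.
  rewrite ep; case: (boolP (p' == 0)) => [/eqP ->|hp']; first by rewrite mul0r size_poly0.
  by rewrite size_Mmonic ?monicXsubC // size_XsubC addn2.
have szs : size s = (if s' == 0%R then 0 else (size s').+1)%N.
  rewrite es; case: (boolP (s' == 0)) => [/eqP ->|hs']; first by rewrite mul0r size_poly0.
  by rewrite size_Mmonic ?monicXsubC // size_XsubC addn2.
move: hn hps'; rewrite szp szs.
case: (boolP (p' == 0)) => [/eqP ->|_]; case: (boolP (s' == 0)) => [/eqP ->|_] /=; rewrite ?size_poly0; lia.
Qed.

Lemma cT3_1 : cT3.[1] = 7. Proof. rewrite /cT3 -!polyC1 !(hornerD, hornerN, hornerX, hornerC, horner_exp, hornerM, hornerMn, hornerXn); rewrite ?expr1n; ring. Qed.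
Lemma cT2_1 : cT2.[1] = 2. Proof. rewrite /cT2 -!polyC1 !(hornerD, hornerN, hornerX, hornerC, horner_exp, hornerM, hornerMn, hornerXn); rewrite ?expr1n; ring. Qed.
Lemma cT1_1 : cT1.[1] = 1. Proof. rewrite /cT1 -!polyC1 !(hornerD, hornerN, hornerX, hornerC, horner_exp, hornerM, hornerMn, hornerXn); rewrite ?expr1n; ring. Qed.

Lemma T_noroot p s : (p != 0) || (s != 0) -> Hh cT3 cT2 cT1 p s != 0.
Proof.
apply: (descent (z := 1)) => {}p {}s hz; apply/eqP => h.
have := congr1 (horner^~ 1) h; rewrite /= Hh_horner horner0 cT3_1 cT2_1 cT1_1 => h1.
have h2 : 7 * (p.[1] * p.[1] * p.[1]) + 2 * (p.[1] * p.[1] * s.[1]) + p.[1] * (s.[1] * s.[1])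
   + s.[1] * s.[1] * s.[1] = 0 by rewrite -h1 /Hh; ring.
have [ha hb] := rat_noroot h2.
by move: hz; rewrite ha hb eqxx.
Qed.

Lemma cQ3_X : cQ3.['X] = cT3. Proof. rewrite /cQ3 /cT3 /px /py -!polyC1 !(hornerD, hornerN, hornerX, hornerC, horner_exp, hornerM, hornerMn, hornerXn); ring. Qed.
Lemma cQ2_X : cQ2.['X] = cT2. Proof. rewrite /cQ2 /cT2 /px /py -!polyC1 !(hornerD, hornerN, hornerX, hornerC, horner_exp, hornerM, hornerMn, hornerXn); ring. Qed.
Lemma cQ1_X : cQ1.['X] = cT1. Proof. rewrite /cQ1 /cT1 /px /py -!polyC1 !(hornerD, hornerN, hornerX, hornerC, horner_exp, hornerM, hornerMn, hornerXn); ring. Qed.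

Lemma Q_noroot p s : (p != 0) || (s != 0) -> Hh cQ3 cQ2 cQ1 p s != 0.
Proof.
apply: (descent (z := 'X)) => {}p {}s hz; apply/eqP => h.
have := congr1 (horner^~ 'X) h; rewrite /= Hh_horner horner0 cQ3_X cQ2_X cQ1_X => h1.
by move/eqP: (T_noroot hz); rewrite h1.
Qed.


Lemma cT3_nz : cT3 != 0.
Proof. by apply/eqP => h; move: cT3_1; rewrite h horner0. Qed.
Lemma cQ3_nz : cQ3 != 0.
Proof. by apply/eqP => h; move: cQ3_X; rewrite h horner0 => /esym/eqP; rewrite (negbTE cT3_nz). Qed.

Lemma bpoly1 : bpoly 1 = bone. Proof. by []. Qed.
Lemma upoly1 : upoly 1 = uone. Proof. by []. Qed.

Theorem mainTheorem1 :
  balg_deg3_with cQ3 cQ2 cQ1 cQ0 Qser /\ ualg_deg3_with cT3 cT2 cT1 cT0 Tser.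
Proof.
split.
- split; first exact: cQ3_nz.
  split; first exact: Qcubic_main.
  move=> a2 a1 a0 h.
  apply: (deg3 bser_rt bpolyD bpolyM bpolyN bpoly1 bpoly_inj (c3 := cQ3) (c2 := cQ2) (c1 := cQ1) (c0 := cQ0) (F := Qser)) => //.
  + exact: cQ3_nz.
  + exact: Qcubic_main.
  + by move=> p s hs; apply: Q_noroot; rewrite hs orbT.
- split; first exact: cT3_nz.
  split; first exact: Tcubic_main.
  move=> a2 a1 a0 h.
  apply: (deg3 user_rt upolyD upolyM upolyN upoly1 upoly_inj (c3 := cT3) (c2 := cT2) (c1 := cT1) (c0 := cT0) (F := Tser)) => //.
  + exact: cT3_nz.
  + exact: Tcubic_main.
  + by move=> p s hs; apply: T_noroot; rewrite hs orbT.
Qed.
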